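(* Let $(x,y,z,v)(t)$ be a normal extremal ($M=1$) starting at the identity with $\varphi_4\neq0$, and suppose $\theta(t)$ is constant on a non-degenerate interval $J\subset\mathbb R$. Let $t_0$ be the point of $\overline J$ closest to $0$ and $y_0=y(t_0)$, $z_0=z(t_0)$, $v_0=v(t_0)$. Then for $t\in J$: $$x(t)\equiv-\frac{\varphi_3}{\varphi_4},\quad y(t)=y_0+\frac{2\varphi_4(t-t_0)}{2\varphi_2\varphi_4-\varphi_3^2},\quad z(t)=z_0+\frac{\varphi_3(t-t_0)}{\varphi_3^2-2\varphi_2\varphi_4},\quad v(t)=v_0+\frac{\varphi_3^2(t-t_0)}{6\varphi_4(2\varphi_2\varphi_4-\varphi_3^2)},$$ where $v_0$ is determined from $x_0=-\varphi_3/\varphi_4$, $y_0$, $z_0$ by $\varphi_1x_0+\varphi_2y_0+(2\varphi_3+\tfrac12\varphi_4x_0)z_0+3\varphi_4v_0=t_0$. In particular, if $\varphi_3=0$ then on $J$: $x\equiv0$, $y(t)=y_0+(t-t_0)/\varphi_2$, $z\equiv z_0$, $v\equiv v_0=(t_0-\varphi_2y_0)/(3\varphi_4)$.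
   Context: Let $\mathfrak g$ be the Engel algebra with basis $X,Y,Z,V$, $[X,Y]=Z$, $[X,Z]=V$, all other brackets of basis elements zero; $G$ the corresponding connected simply connected Lie group, with coordinates of the first kind $(x,y,z,v)$ (identity $=0$). Let $F$ be an arbitrary norm on $\mathbb R^2$, $U=\{u:F(u)\le1\}$, $(u_1,u_2)\leftrightarrow u_1X(e)+u_2Y(e)$. The control system is $\dot x=u_1,\ \dot y=u_2,\ \dot z=\tfrac12(xu_2-yu_1),\ \dot v=-\tfrac12(z+\tfrac16xy)u_1+\tfrac1{12}x^2u_2$, measurable $u(t)\in U$, $x(0)=y(0)=z(0)=v(0)=0$. An extremal is a trajectory with control $u(t)$ for which there is a nowhere vanishing absolutely continuous $\psi=(\psi_1,\dots,\psi_4)$ with a.e. $\dot\psi_1=\tfrac1{12}\psi_4yu_1-(\tfrac12\psi_3+\tfrac16\psi_4x)u_2$, $\dot\psi_2=(\tfrac12\psi_3+\tfrac1{12}\psi_4x)u_1$, $\dot\psi_3=\tfrac12\psi_4u_1$, $\dot\psi_4=0$ and $h_1u_1(t)+h_2u_2(t)=\max_{u\in U}(h_1u_1+h_2u_2)=M$ a.e., with $h_1=\psi_1-\tfrac12\psi_3y-\tfrac1{12}\psi_4xy-\tfrac12\psi_4z$, $h_2=\psi_2+\tfrac12\psi_3x+\tfrac1{12}\psi_4x^2$, $M\ge0$ constant; normal means $M>0$, normalized to $M=1$. $\varphi_i=\psi_i(0)$. $F_U(h)=\max_{u\in U}h\cdot u$, $U^*=\{h:F_U(h)\le1\}$; $r(\theta)>0$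 with $F_U(r(\theta)\cos\theta,r(\theta)\sin\theta)=1$ is the polar equation of $\partial U^*$. For $M=1$, $\theta(t)$ is a continuous function with $(h_1(t),h_2(t))=r(\theta(t))(\cos\theta(t),\sin\theta(t))$. *)

(* Defs.v *)
From Stdlib Require Import Reals Lra.
Open Scope R_scope.

Fixpoint rsum (n : nat) (g : nat -> R) : R :=
  match n with O => 0 | S m => rsum m g + g m end.

Definition null_set (N : R -> Prop) : Prop :=
  forall eps, 0 < eps ->
    exists a b : nat -> R,
      (forall n, a n <= b n) /\
      (forall t, N t -> exists n, a n < t < b n) /\
      (forall n, rsum n (fun k => b k - a k) < eps).

Definition ae (P : R -> Prop) : Prop :=
  exists N, null_set N /\ forall t, ~ N t -> P t.

Definition ac_on (f : R -> R) (a b : R) : Prop :=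
  forall eps, 0 < eps -> exists delta, 0 < delta /\
    forall (n : nat) (c d : nat -> R),
      (forall i, (i < n)%nat -> a <= c i /\ c i <= d i /\ d i <= b) ->
      (forall i j, (i < j)%nat -> (j < n)%nat -> d i <= c j) ->
      rsum n (fun i => d i - c i) < delta ->
      rsum n (fun i => Rabs (f (d i) - f (c i))) < eps.

Definition loc_ac (f : R -> R) : Prop :=
  forall a b, a <= b -> ac_on f a b.

Definition is_norm2 (F : R -> R -> R) : Prop :=
  (forall a b, F a b = 0 -> a = 0 /\ b = 0) /\
  (forall k a b, F (k * a) (k * b) = Rabs k * F a b) /\
  (forall a b c d, F (a + c) (b + d) <= F a b + F c d).

Definition inU (F : R -> R -> R) (u1 u2 : R) : Prop := F u1 u2 <= 1.

Definition is_FU (F : R -> R -> R) (h1 h2 m : R) : Prop :=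
  (exists u1 u2, inU F u1 u2 /\ h1 * u1 + h2 * u2 = m) /\
  (forall u1 u2, inU F u1 u2 -> h1 * u1 + h2 * u2 <= m).

Definition is_r (F : R -> R -> R) (th rho : R) : Prop :=
  0 < rho /\ is_FU F (rho * cos th) (rho * sin th) 1.

Definition hh1 (p1 p3 p4 x y z : R) : R :=
  p1 - / 2 * p3 * y - / 12 * p4 * x * y - / 2 * p4 * z.
Definition hh2 (p2 p3 p4 x : R) : R :=
  p2 + / 2 * p3 * x + / 12 * p4 * x * x.

(* (x,y,z,v) with control (u1,u2) is a normal (M = 1) extremal starting
   at the identity, with adjoint psi = (p1,p2,p3,p4). *)
Definition normal_extremal (F : R -> R -> R)
    (u1 u2 x y z v p1 p2 p3 p4 : R -> R) : Prop :=
  (forall t, inU F (u1 t) (u2 t)) /\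
  x 0 = 0 /\ y 0 = 0 /\ z 0 = 0 /\ v 0 = 0 /\
  loc_ac x /\ loc_ac y /\ loc_ac z /\ loc_ac v /\
  loc_ac p1 /\ loc_ac p2 /\ loc_ac p3 /\ loc_ac p4 /\
  (forall t, ~ (p1 t = 0 /\ p2 t = 0 /\ p3 t = 0 /\ p4 t = 0)) /\
  ae (fun t =>
    derivable_pt_lim x t (u1 t) /\
    derivable_pt_lim y t (u2 t) /\
    derivable_pt_lim z t (/ 2 * (x t * u2 t - y t * u1 t)) /\
    derivable_pt_lim v t
      (- / 2 * (z t + / 6 * x t * y t) * u1 t + / 12 * x t ^ 2 * u2 t) /\
    derivable_pt_lim p1 t
      (/ 12 * p4 t * y t * u1 t - (/ 2 * p3 t + / 6 * p4 t * x t) * u2 t) /\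
    derivable_pt_lim p2 t ((/ 2 * p3 t + / 12 * p4 t * x t) * u1 t) /\
    derivable_pt_lim p3 t (/ 2 * p4 t * u1 t) /\
    derivable_pt_lim p4 t 0 /\
    (let h1 := hh1 (p1 t) (p3 t) (p4 t) (x t) (y t) (z t) in
     let h2 := hh2 (p2 t) (p3 t) (p4 t) (x t) in
     h1 * u1 t + h2 * u2 t = 1 /\
     forall w1 w2, inU F w1 w2 -> h1 * w1 + h2 * w2 <= 1)).

Definition nondeg_interval (J : R -> Prop) : Prop :=
  (forall a b c, J a -> J b -> a <= c <= b -> J c) /\
  (exists a b, J a /\ J b /\ a < b).

Definition in_closure (J : R -> Prop) (t : R) : Prop :=
  forall eps, 0 < eps -> exists s, J s /\ Rabs (s - t) < eps.

(* Main.v *)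
Require Import Defs.
From Stdlib Require Import Reals.
From Stdlib Require Import Lra Lia List Classical FunctionalExtensionality.
Open Scope R_scope.


Lemma rsum_shift : forall n h, rsum (S n) h = h 0%nat + rsum n (fun i => h (S i)).
Proof.
  induction n; intros h; simpl in *. ring.
  rewrite IHn. simpl. ring.
Qed.

Lemma rsum_le : forall n g h, (forall i, (i < n)%nat -> g i <= h i) -> rsum n g <= rsum n h.
Proof.
  induction n; intros g h H; simpl. lra.
  assert (rsum n g <= rsum n h) by (apply IHn; intros; apply H; lia).
  assert (g n <= h n) by (apply H; lia). lra.
Qed.

Lemma rsum_plus : forall n g h, rsum n (fun i => g i + h i) = rsum n g + rsum n h.
Proof. induction n; intros; simpl. ring. rewrite IHn. ring. Qed.

Lemma rsum_scal : forall n k g, rsum n (fun i => k * g i) = k * rsum n g.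
Proof. induction n; intros; simpl. ring. rewrite IHn. ring. Qed.

Lemma rsum_ge0 : forall n g, (forall i, 0 <= g i) -> 0 <= rsum n g.
Proof. induction n; intros; simpl. lra. specialize (IHn g H). specialize (H n). lra. Qed.

Lemma rsum_mono : forall n g, (forall i, 0 <= g i) -> rsum n g <= rsum (S n) g.
Proof. intros; simpl. specialize (H n). lra. Qed.

Definition lsum (g : R * R -> R) (L : list (R*R)) : R :=
  fold_right (fun p acc => g p + acc) 0 L.

Lemma rsum_list : forall g L d0,
  rsum (length L) (fun i => g (nth i L d0)) = lsum g L.
Proof.
  intros g L d0; induction L. reflexivity.
  change (length (a :: L)) with (S (length L)). rewrite rsum_shift. simpl. rewrite IHL. reflexivity.
Qed.

Lemma lsum_app : forall g L1 L2, lsum g (L1 ++ L2) = lsum g L1 + lsum g L2.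
Proof. intros; induction L1; simpl. ring. rewrite IHL1. ring. Qed.

Fixpoint ok (al : R) (L : list (R*R)) : Prop :=
  match L with nil => True | p :: L' => al <= fst p /\ fst p <= snd p /\ ok (snd p) L' end.

Lemma ok_mono : forall L al be, ok be L -> al <= be -> ok al L.
Proof. destruct L; simpl; intros; auto. destruct H as [? [? ?]]. repeat split; auto; lra. Qed.

Lemma ok_nth1 : forall L al i, ok al L -> (i < length L)%nat ->
  al <= fst (nth i L (0,0)) /\ fst (nth i L (0,0)) <= snd (nth i L (0,0)).
Proof.
  induction L; intros al i H Hi; simpl in *. lia.
  destruct H as [H1 [H2 H3]]. destruct i. lra.
  destruct (IHL _ i H3) as [? ?]. lia. split; lra.
Qed.

Lemma ok_nth2 : forall L al i j, ok al L -> (i < j)%nat -> (j < length L)%nat ->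
  snd (nth i L (0,0)) <= fst (nth j L (0,0)).
Proof.
  induction L; intros al i j H Hij Hj; simpl in *. lia.
  destruct H as [H1 [H2 H3]]. destruct j. lia. destruct i.
  - destruct (ok_nth1 L _ j H3) as [? ?]. lia. lra.
  - apply (IHL _ i j H3); lia.
Qed.

Lemma ok_app : forall L al s t, ok al L -> Forall (fun p => snd p <= s) L -> al <= s -> s <= t ->
  ok al (L ++ (s,t) :: nil).
Proof.
  induction L; intros al s t H HF H1 H2; simpl in *. repeat split; simpl; auto.
  destruct H as [? [? ?]]. inversion HF; subst. repeat split; auto.
  all: try (apply IHL; auto).
Qed.

Lemma ok_filter : forall q L al, ok al L -> ok al (filter q L).
Proof.
  induction L; intros al H; simpl in *; auto.
  destruct H as [? [? ?]]. destruct (q a); simpl.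
  repeat split; auto.
  apply ok_mono with (snd a). apply IHL; auto. lra.
Qed.

Lemma lsum_filter : forall g q L, lsum g L = lsum g (filter q L) + lsum g (filter (fun p => negb (q p)) L).
Proof.
  intros g q L; induction L; simpl. ring.
  destruct (q a); simpl; rewrite IHL; ring.
Qed.

Definition len (p : R * R) := snd p - fst p.

Lemma len_bound : forall L al B, ok al L -> Forall (fun p => snd p <= B) L -> al <= B ->
  lsum len L <= B - al.
Proof.
  induction L; intros al B H HF Hal; simpl in *. lra.
  destruct H as [? [? ?]]. inversion HF; subst.
  assert (lsum len L <= B - snd a) by (apply IHL; auto).
  unfold len at 1. lra.
Qed.

Lemma cover_len : forall (A B : nat -> R), (forall k, A k <= B k) ->
  forall K L al, ok al L ->
  (forall p, In p L -> exists k, (k < K)%nat /\ A k < fst p /\ snd p < B k) ->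
  lsum len L <= rsum K (fun k => B k - A k).
Proof.
  intros A B HAB. induction K; intros L al Hok Hin.
  - destruct L as [|p L]. simpl; lra. destruct (Hin p) as [k [Hk _]]. left; auto. lia.
  - set (q := fun p : R*R => if Rlt_dec (A K) (fst p) then if Rlt_dec (snd p) (B K) then true else false else false).
    rewrite (lsum_filter len q L). simpl rsum.
    assert (H1 : lsum len (filter q L) <= B K - A K).
    { remember (filter q L) as L1. destruct L1 as [|p L1']. simpl. specialize (HAB K); lra.
      assert (Hp : In p (filter q L)) by (rewrite <- HeqL1; left; auto).
      apply filter_In in Hp. destruct Hp as [_ Hq]. unfold q in Hq.
      destruct (Rlt_dec (A K) (fst p)); [|discriminate]. destruct (Rlt_dec (snd p) (B K)); [|discriminate].
      apply len_bound. 
      assert (Ho : ok al (p :: L1')) by (rewrite HeqL1; apply ok_filter; auto).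
      simpl in Ho |- *. destruct Ho as [? [? ?]]. repeat split; auto; lra.
      apply Forall_forall. intros p' Hp'. rewrite HeqL1 in Hp'. apply filter_In in Hp'.
      destruct Hp' as [_ Hq']. unfold q in Hq'.
      destruct (Rlt_dec (A K) (fst p')); [|discriminate]. destruct (Rlt_dec (snd p') (B K)); [|discriminate]. lra.
      specialize (HAB K); lra. }
    assert (H2 : lsum len (filter (fun p => negb (q p)) L) <= rsum K (fun k => B k - A k)).
    { apply IHK with al. apply ok_filter; auto.
      intros p Hp. apply filter_In in Hp. destruct Hp as [Hp Hq].
      destruct (Hin p Hp) as [k [Hk [Ha Hb]]]. exists k. repeat split; auto.
      destruct (Nat.eq_dec k K). subst k. unfold q in Hq.
      destruct (Rlt_dec (A K) (fst p)); [|contradiction]. destruct (Rlt_dec (snd p) (B K)); [|contradiction]. discriminate.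
      lia. }
    lra.
Qed.

Definition vari (f : R -> R) (p : R * R) := Rabs (f (snd p) - f (fst p)).

Lemma ac_list : forall f a b, ac_on f a b -> forall eps, 0 < eps -> exists delta, 0 < delta /\
  forall L, ok a L -> Forall (fun p => snd p <= b) L -> lsum len L < delta -> lsum (vari f) L < eps.
Proof.
  intros f a b Hac eps Heps. destruct (Hac eps Heps) as [delta [Hd H]]. exists delta; split; auto.
  intros L Hok HF Hl.
  specialize (H (length L) (fun i => fst (nth i L (0,0))) (fun i => snd (nth i L (0,0)))).
  rewrite <- (rsum_list (vari f) L (0,0)). unfold vari. apply H.
  - intros i Hi. destruct (ok_nth1 L a i Hok Hi). repeat split; auto.
    rewrite Forall_forall in HF. apply HF. apply nth_In; auto.
  - intros i j Hij Hj. apply (ok_nth2 L a); auto.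
  - rewrite <- (rsum_list len L (0,0)) in Hl. exact Hl.
Qed.

Lemma lub_approx : forall (E : R -> Prop) m, is_lub E m -> forall e, 0 < e -> exists s, E s /\ m - e < s <= m.
Proof.
  intros E m [Hub Hl] e He. apply NNPP; intro Hn.
  assert (is_upper_bound E (m - e)).
  { intros s Hs. destruct (Rle_dec s (m - e)); auto. exfalso; apply Hn. exists s. split; auto.
    split. lra. apply Hub; auto. }
  specialize (Hl _ H). lra.
Qed.

Lemma core : forall f a b N, a <= b -> ac_on f a b -> null_set N ->
  (forall t, a < t < b -> ~ N t -> derivable_pt_lim f t 0) -> f a = f b.
Proof.
  intros f a b N Hab Hac HN Hd.
  assert (Hkey : forall eta, 0 < eta -> Rabs (f b - f a) <= eta * (b - a) + eta).
  { intros eta Heta.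
    destruct (ac_list f a b Hac eta Heta) as [delta [Hdel HL]].
    destruct (HN (delta / 2)) as [A0 [B0 [HAB0 [Hcov0 Hsum0]]]]. lra.
    set (A := fun k => match k with O => a - delta / 8 | S O => b - delta / 8 | S (S k) => A0 k end).
    set (B := fun k => match k with O => a + delta / 8 | S O => b + delta / 8 | S (S k) => B0 k end).
    assert (HAB : forall k, A k <= B k).
    { intros [|[|k]]; simpl; try lra. apply HAB0. }
    assert (Hsum : forall K, rsum K (fun k => B k - A k) < delta).
    { intros K.
      assert (Hge : forall i, 0 <= B i - A i) by (intro i; specialize (HAB i); lra).
      assert (rsum K (fun k => B k - A k) <= rsum (S (S K)) (fun k => B k - A k)).
      { apply Rle_trans with (rsum (S K) (fun k => B k - A k)); apply rsum_mono; auto. }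
      rewrite rsum_shift, rsum_shift in H. simpl in H.
      specialize (Hsum0 K). lra. }
    set (P := fun s => a <= s <= b /\ exists L K, ok a L /\ Forall (fun p => snd p <= s) L /\
       (forall p, In p L -> exists k, (k < K)%nat /\ A k < fst p /\ snd p < B k) /\
       Rabs (f s - f a) <= eta * (s - a) + lsum (vari f) L).
    assert (Pa : P a).
    { split. lra. exists nil, O. simpl. repeat split; auto. intros p []. 
      replace (f a - f a) with 0 by ring. rewrite Rabs_R0. lra. }
    destruct (completeness P) as [m Hm].
    { exists b. intros s [Hs _]. lra. }
    { exists a; auto. }
    assert (Ham : a <= m) by (apply Hm; auto).
    assert (Hmb : m <= b) by (apply Hm; intros s [Hs _]; lra).
    assert (Hstep : exists t, m <= t <= b /\ (m < b -> m < t) /\ P t).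
    { destruct (classic (N m \/ m = a \/ m = b)) as [HNm | HNm].
      - assert (Hk : exists k, A k < m < B k).
        { destruct HNm as [HNm | [HNm | HNm]].
          + destruct (Hcov0 m HNm) as [k Hk]. exists (S (S k)). simpl. auto.
          + exists O. simpl. lra.
          + exists (S O). simpl. lra. }
        destruct Hk as [k [Hk1 Hk2]].
        destruct (lub_approx P m Hm (m - A k)) as [s [Ps Hs]]. lra.
        set (t := Rmin b ((m + B k) / 2)).
        assert (Ht1 : m <= t) by (unfold t; apply Rmin_glb; lra).
        assert (Ht2 : t <= b) by (unfold t; apply Rmin_l).
        assert (Ht3 : t < B k) by (unfold t; apply Rle_lt_trans with ((m + B k)/2); [apply Rmin_r | lra]).
        exists t. split. lra. split.
        { intros Hmb'. unfold t. unfold Rmin. destruct (Rle_dec b ((m + B k) / 2)); lra. }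
        destruct Ps as [Hs0 [L [K [Hok [HF [Hin Hb]]]]]].
        split. lra. exists (L ++ (s,t) :: nil), (Nat.max K (S k)).
        split. apply ok_app; auto; lra.
        split. apply Forall_app. split. rewrite Forall_forall in HF |- *. intros p Hp. specialize (HF p Hp). lra.
          constructor. simpl; lra. constructor.
        split. intros p Hp. apply in_app_or in Hp. destruct Hp as [Hp | [Hp | []]].
          destruct (Hin p Hp) as [k' [Hk' Hk'']]. exists k'. split; auto. lia.
          subst p. exists k. simpl. split. lia. split; lra.
        rewrite lsum_app. simpl. unfold vari at 2. simpl.
        replace (f t - f a) with ((f t - f s) + (f s - f a)) by ring.
        assert (eta * (s - a) <= eta * (t - a)) by (apply Rmult_le_compat_l; lra).
        eapply Rle_trans. apply Rabs_triang. lra.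
      - assert (Hm1 : ~ N m) by tauto. assert (a < m < b) by (split; destruct (Rle_lt_or_eq_dec _ _ Ham); try lra; destruct (Rle_lt_or_eq_dec _ _ Hmb); try lra; tauto).
        destruct (Hd m H Hm1 eta Heta) as [del Hdel'].
        assert (Hloc : forall t, Rabs (t - m) < del -> Rabs (f t - f m) <= eta * Rabs (t - m)).
        { intros t Ht. destruct (Req_dec t m). subst t. replace (f m - f m) with 0 by ring. rewrite Rabs_R0. 
          apply Rmult_le_pos; [lra| apply Rabs_pos].
          specialize (Hdel' (t - m)). replace (m + (t - m)) with t in Hdel' by ring.
          assert (Hne : t - m <> 0) by lra. specialize (Hdel' Hne Ht).
          rewrite Rminus_0_r in Hdel'. unfold Rdiv in Hdel'. rewrite Rabs_mult, Rabs_inv in Hdel'.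
          assert (0 < Rabs (t - m)) by (apply Rabs_pos_lt; auto).
          apply Rmult_lt_compat_r with (r := Rabs (t - m)) in Hdel'; auto.
          rewrite Rmult_assoc, Rinv_l in Hdel' by lra. lra. }
        destruct (lub_approx P m Hm (del / 2)) as [s [Ps Hs]]. destruct del; simpl; lra.
        set (t := Rmin b (m + del / 2)).
        assert (Ht1 : m <= t) by (unfold t; apply Rmin_glb; [lra | destruct del; simpl; lra]).
        assert (Ht2 : t <= b) by (unfold t; apply Rmin_l).
        assert (Ht3 : t <= m + del / 2) by (unfold t; apply Rmin_r).
        exists t. split. lra. split.
        { intros Hmb'. unfold t. unfold Rmin. destruct (Rle_dec b (m + del / 2)). lra. destruct del; simpl in *; lra. }
        destruct Ps as [Hs0 [L [K [Hok [HF [Hin Hb]]]]]].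
        split. lra. exists L, K. split; auto. split.
        rewrite Forall_forall in HF |- *. intros p Hp. specialize (HF p Hp). lra.
        split; auto.
        assert (E1 : Rabs (f t - f m) <= eta * (t - m)).
        { rewrite <- (Rabs_right (t - m)) by lra. apply Hloc. rewrite Rabs_right by lra. destruct del; simpl in *; lra. }
        assert (E2 : Rabs (f s - f m) <= eta * (m - s)).
        { replace (m - s) with (Rabs (s - m)). apply Hloc. rewrite Rabs_left1 by lra. destruct del; simpl in *; lra.
          rewrite Rabs_left1 by lra. ring. }
        replace (f t - f a) with ((f t - f m) + (- (f s - f m)) + (f s - f a)) by ring.
        eapply Rle_trans. apply Rabs_triang. eapply Rle_trans. apply Rplus_le_compat_r. apply Rabs_triang.
        rewrite Rabs_Ropp. lra. }
    destruct Hstep as [t [Ht1 [Ht2 Pt]]].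
    assert (t <= m) by (apply Hm; auto).
    assert (Htb : t = b) by (destruct (Rle_lt_or_eq_dec _ _ Hmb); [specialize (Ht2 r); lra | lra]).
    subst t. destruct Pt as [_ [L [K [Hok [HF [Hin Hb]]]]]].
    assert (lsum len L <= rsum K (fun k => B k - A k)) by (apply (cover_len A B HAB K L a); auto).
    specialize (Hsum K). assert (lsum (vari f) L < eta) by (apply HL; auto; lra). lra. }
  apply NNPP; intro Hne.
  assert (Hpos : 0 < Rabs (f b - f a)) by (apply Rabs_pos_lt; lra).
  specialize (Hkey (Rabs (f b - f a) / (2 * (b - a + 1)))).
  assert (0 < Rabs (f b - f a) / (2 * (b - a + 1))) by (apply Rdiv_lt_0_compat; lra).
  specialize (Hkey H).
  assert (Rabs (f b - f a) / (2 * (b - a + 1)) * (b - a) + Rabs (f b - f a) / (2 * (b - a + 1)) = Rabs (f b - f a) / 2) by (field; lra).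
  lra.
Qed.

Lemma ac_comb : forall h f g a b K1 K2, 0 <= K1 -> 0 <= K2 ->
  ac_on f a b -> ac_on g a b ->
  (forall c d, a <= c -> c <= d -> d <= b -> Rabs (h d - h c) <= K1 * Rabs (f d - f c) + K2 * Rabs (g d - g c)) ->
  ac_on h a b.
Proof.
  intros h f g a b K1 K2 HK1 HK2 Hf Hg Hh eps Heps.
  destruct (Hf (eps / (2 * (K1 + 1)))) as [d1 [Hd1 H1]]. apply Rdiv_lt_0_compat; lra.
  destruct (Hg (eps / (2 * (K2 + 1)))) as [d2 [Hd2 H2]]. apply Rdiv_lt_0_compat; lra.
  exists (Rmin d1 d2). split. apply Rmin_glb_lt; auto.
  intros n c d Hcd Hord Hs.
  assert (Hs1 : rsum n (fun i => d i - c i) < d1) by (eapply Rlt_le_trans; [exact Hs| apply Rmin_l]).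
  assert (Hs2 : rsum n (fun i => d i - c i) < d2) by (eapply Rlt_le_trans; [exact Hs| apply Rmin_r]).
  specialize (H1 n c d Hcd Hord Hs1). specialize (H2 n c d Hcd Hord Hs2).
  eapply Rle_lt_trans. apply (rsum_le n _ (fun i => K1 * Rabs (f (d i) - f (c i)) + K2 * Rabs (g (d i) - g (c i)))).
  intros i Hi. destruct (Hcd i Hi) as [? [? ?]]. apply Hh; auto.
  rewrite rsum_plus, rsum_scal, rsum_scal.
  assert (K1 * rsum n (fun i => Rabs (f (d i) - f (c i))) <= K1 * (eps / (2 * (K1 + 1)))) by (apply Rmult_le_compat_l; lra).
  assert (K2 * rsum n (fun i => Rabs (g (d i) - g (c i))) <= K2 * (eps / (2 * (K2 + 1)))) by (apply Rmult_le_compat_l; lra).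
  assert (K1 * (eps / (2 * (K1 + 1))) < eps / 2).
  { replace (K1 * (eps / (2 * (K1 + 1)))) with ((eps / 2) * (K1 / (K1 + 1))) by (field; lra).
    rewrite <- (Rmult_1_r (eps / 2)) at 2. apply Rmult_lt_compat_l. lra.
    apply (Rmult_lt_reg_r (K1 + 1)). lra. unfold Rdiv. rewrite Rmult_assoc, Rinv_l by lra. lra. }
  assert (K2 * (eps / (2 * (K2 + 1))) < eps / 2).
  { replace (K2 * (eps / (2 * (K2 + 1)))) with ((eps / 2) * (K2 / (K2 + 1))) by (field; lra).
    rewrite <- (Rmult_1_r (eps / 2)) at 2. apply Rmult_lt_compat_l. lra.
    apply (Rmult_lt_reg_r (K2 + 1)). lra. unfold Rdiv. rewrite Rmult_assoc, Rinv_l by lra. lra. }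
  lra.
Qed.

Lemma LA_const : forall k, loc_ac (fun _ => k).
Proof.
  intros k a b Hab eps Heps. exists 1. split. lra. intros n c d _ _ _.
  replace (rsum n (fun i => Rabs (k - k))) with 0. auto.
  clear. induction n; simpl. ring. rewrite <- IHn. replace (k - k) with 0 by ring. rewrite Rabs_R0. ring.
Qed.

Lemma LA_id : loc_ac (fun t => t).
Proof.
  intros a b Hab eps Heps. exists eps. split. auto. intros n c d Hcd _ Hs.
  eapply Rle_lt_trans; [|exact Hs]. apply rsum_le. intros i Hi. destruct (Hcd i Hi) as [? [? ?]].
  rewrite Rabs_right by lra. lra.
Qed.

Lemma LA_plus : forall f g, loc_ac f -> loc_ac g -> loc_ac (fun t => f t + g t).
Proof.
  intros f g Hf Hg a b Hab. apply ac_comb with f g 1 1; auto; try lra.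
  intros. replace (f d + g d - (f c + g c)) with ((f d - f c) + (g d - g c)) by ring.
  eapply Rle_trans. apply Rabs_triang. lra.
Qed.

Lemma LA_scal : forall k f, loc_ac f -> loc_ac (fun t => k * f t).
Proof.
  intros k f Hf a b Hab. apply ac_comb with f f (Rabs k) 0; auto; try lra. apply Rabs_pos.
  intros. replace (k * f d - k * f c) with (k * (f d - f c)) by ring. rewrite Rabs_mult. lra.
Qed.

Lemma LA_cont : forall f, loc_ac f -> forall c eps, 0 < eps -> exists del, 0 < del /\
  forall s, Rabs (s - c) < del -> Rabs (f s - f c) < eps.
Proof.
  intros f Hf c eps Heps. destruct (Hf (c - 1) (c + 1) ltac:(lra) eps Heps) as [del [Hdel H]].
  exists (Rmin del 1). split. apply Rmin_glb_lt; lra. intros s Hs.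
  assert (Hs1 : Rabs (s - c) < del) by (eapply Rlt_le_trans; [exact Hs | apply Rmin_l]).
  assert (Hs2 : Rabs (s - c) < 1) by (eapply Rlt_le_trans; [exact Hs | apply Rmin_r]).
  apply Rabs_def2 in Hs1. apply Rabs_def2 in Hs2.
  specialize (H 1%nat (fun _ => Rmin s c) (fun _ => Rmax s c)). simpl in H.
  unfold Rmin, Rmax in H. destruct (Rle_dec s c).
  - rewrite <- Rabs_Ropp. replace (- (f s - f c)) with (f c - f s) by ring.
    replace (Rabs (f c - f s)) with (0 + Rabs (f c - f s)) by ring. apply H.
    intros; lra. intros; lia. lra.
  - replace (Rabs (f s - f c)) with (0 + Rabs (f s - f c)) by ring. apply H.
    intros; lra. intros; lia. lra.
Qed.

Lemma LA_contpt : forall f, loc_ac f -> forall c, continuity_pt f c.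
Proof.
  intros f Hf c eps Heps. destruct (LA_cont f Hf c eps Heps) as [del [Hdel H]].
  exists del. split. lra. intros s [_ Hs]. simpl in *. unfold R_dist in *. apply H; auto.
Qed.

Lemma LA_bound : forall f a b, loc_ac f -> a <= b -> exists M, 0 < M /\ forall t, a <= t <= b -> Rabs (f t) <= M.
Proof.
  intros f a b Hf Hab.
  destruct (continuity_ab_maj f a b Hab) as [Mx [HM _]]. intros; apply LA_contpt; auto.
  destruct (continuity_ab_min f a b Hab) as [mx [Hm _]]. intros; apply LA_contpt; auto.
  exists (Rabs (f Mx) + Rabs (f mx) + 1). split. pose proof (Rabs_pos (f Mx)); pose proof (Rabs_pos (f mx)); lra.
  intros t Ht. specialize (HM t Ht). specialize (Hm t Ht).
  unfold Rabs. repeat destruct Rcase_abs; lra.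
Qed.

Lemma LA_mult : forall f g, loc_ac f -> loc_ac g -> loc_ac (fun t => f t * g t).
Proof.
  intros f g Hf Hg a b Hab.
  destruct (LA_bound f a b Hf Hab) as [Mf [HMf Bf]]. destruct (LA_bound g a b Hg Hab) as [Mg [HMg Bg]].
  apply ac_comb with f g Mg Mf; auto; try lra.
  intros c d H1 H2 H3.
  replace (f d * g d - f c * g c) with (g c * (f d - f c) + f d * (g d - g c)) by ring.
  eapply Rle_trans. apply Rabs_triang. rewrite !Rabs_mult.
  assert (Rabs (g c) * Rabs (f d - f c) <= Mg * Rabs (f d - f c)) by (apply Rmult_le_compat_r; [apply Rabs_pos | apply Bg; lra]).
  assert (Rabs (f d) * Rabs (g d - g c) <= Mf * Rabs (g d - g c)) by (apply Rmult_le_compat_r; [apply Rabs_pos | apply Bf; lra]).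
  lra.
Qed.

Lemma D_eq : forall f t l l', derivable_pt_lim f t l -> l = l' -> derivable_pt_lim f t l'.
Proof. intros; subst; auto. Qed.
Lemma D_plus : forall f g t a b, derivable_pt_lim f t a -> derivable_pt_lim g t b ->
  derivable_pt_lim (fun s => f s + g s) t (a + b).
Proof. intros. apply (derivable_pt_lim_plus f g); auto. Qed.
Lemma D_mult : forall f g t a b, derivable_pt_lim f t a -> derivable_pt_lim g t b ->
  derivable_pt_lim (fun s => f s * g s) t (a * g t + f t * b).
Proof. intros. apply (derivable_pt_lim_mult f g); auto. Qed.
Lemma D_const : forall k t, derivable_pt_lim (fun _ => k) t 0.
Proof. intros. apply derivable_pt_lim_const. Qed.
Lemma D_id : forall t, derivable_pt_lim (fun s => s) t 1.
Proof. intros. apply derivable_pt_lim_id. Qed.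
Lemma D_scal : forall k f t a, derivable_pt_lim f t a -> derivable_pt_lim (fun s => k * f s) t (k * a).
Proof. intros. eapply D_eq. apply (D_mult (fun _ => k) f). apply D_const. eauto. ring. Qed.

Lemma D_loc_const : forall g r al be, al < r < be -> (forall s, al < s < be -> g s = g r) -> derivable_pt_lim g r 0.
Proof.
  intros g r al be Hr Hc eps Heps.
  assert (Hp : 0 < Rmin (r - al) (be - r)) by (apply Rmin_glb_lt; lra).
  exists (mkposreal _ Hp). intros h Hh Hlt. simpl in Hlt.
  assert (Rabs h < r - al) by (eapply Rlt_le_trans; [exact Hlt | apply Rmin_l]).
  assert (Rabs h < be - r) by (eapply Rlt_le_trans; [exact Hlt | apply Rmin_r]).
  apply Rabs_def2 in H. apply Rabs_def2 in H0.
  rewrite Hc by lra. replace ((g r - g r) / h - 0) with 0 by (field; auto). rewrite Rabs_R0; auto.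
Qed.

Lemma rho_unique : forall F th r1 r2, is_r F th r1 -> is_r F th r2 -> r1 = r2.
Proof.
  assert (H : forall F th r1 r2, is_r F th r1 -> is_r F th r2 -> r2 <= r1).
  { intros F th r1 r2 [H1 [[u1 [u2 [Hu He]]] _]] [H2 [_ Hm]].
    specialize (Hm u1 u2 Hu).
    assert (Hq : r1 * (cos th * u1 + sin th * u2) = 1) by lra.
    assert (Hq2 : r2 * (cos th * u1 + sin th * u2) <= 1) by lra.
    assert (Hp : 0 < cos th * u1 + sin th * u2).
    { destruct (Rlt_le_dec 0 (cos th * u1 + sin th * u2)); auto.
      assert (r1 * (cos th * u1 + sin th * u2) <= 0).
      { rewrite <- (Rmult_0_r r1). apply Rmult_le_compat_l; lra. } lra. }
    apply (Rmult_le_reg_r (cos th * u1 + sin th * u2)); auto. lra. }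
  intros. apply Rle_antisym; eapply H; eauto.
Qed.

Lemma dense : forall N al be, null_set N -> al < be -> exists r, al < r < be /\ ~ N r.
Proof.
  intros N al be HN Hab. apply NNPP; intro Hn.
  assert (al = be).
  { apply (core (fun t => t) al be N); auto. lra. apply LA_id; lra.
    intros t Ht HNt. exfalso; apply Hn. exists t; auto. }
  lra.
Qed.

Lemma cont_dense : forall g N al be s c, loc_ac g -> null_set N -> al < be -> al <= s <= be ->
  (forall r, al < r < be -> ~ N r -> g r = c) -> g s = c.
Proof.
  intros g N al be s c Hg HN Hab Hs H. apply NNPP; intro Hne.
  assert (Hp : 0 < Rabs (g s - c)) by (apply Rabs_pos_lt; lra).
  destruct (LA_cont g Hg s _ Hp) as [del [Hdel Hc]].
  destruct (dense N (Rmax al (s - del/2)) (Rmin be (s + del/2)) HN) as [r [Hr HNr]].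
  { unfold Rmax, Rmin. destruct (Rle_dec al (s - del / 2)); destruct (Rle_dec be (s + del/2)); lra. }
  assert (Hr1 : al < r < be).
  { split. eapply Rle_lt_trans; [apply Rmax_l | apply Hr]. eapply Rlt_le_trans; [apply Hr | apply Rmin_l]. }
  assert (Hr2 : Rabs (r - s) < del).
  { apply Rabs_def1.
    assert (r < s + del / 2) by (eapply Rlt_le_trans; [apply Hr | apply Rmin_r]).
    lra. assert (s - del / 2 < r) by (eapply Rle_lt_trans; [apply Rmax_r | apply Hr]). lra. }
  specialize (Hc r Hr2). rewrite (H r Hr1 HNr) in Hc.
  rewrite <- Rabs_Ropp in Hc. replace (- (c - g s)) with (g s - c) in Hc by ring. lra.
Qed.

Lemma lin_between : forall g N p q k, loc_ac g -> null_set N ->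
  (forall r, Rmin p q < r < Rmax p q -> ~ N r -> derivable_pt_lim g r k) -> g p - g q = k * (p - q).
Proof.
  intros g N p q k Hg HN Hd.
  set (h := fun t => g t + (- k) * t).
  assert (Hh : h (Rmin p q) = h (Rmax p q)).
  { apply core with N; auto. apply Rle_trans with p. apply Rmin_l. apply Rmax_l.
    apply LA_plus; auto. apply LA_scal. apply LA_id. apply Rle_trans with p. apply Rmin_l. apply Rmax_l.
    intros t Ht HNt. unfold h. eapply D_eq. apply D_plus. apply Hd; auto. apply D_scal. apply D_id. ring. }
  unfold h, Rmin, Rmax in Hh. destruct (Rle_dec p q); lra.
Qed.

Lemma const_global : forall g N, loc_ac g -> null_set N -> (forall r, ~ N r -> derivable_pt_lim g r 0) ->
  forall t, g t = g 0.
Proof.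
  intros g N Hg HN Hd t. assert (g t - g 0 = 0 * (t - 0)). { apply lin_between with N; auto. } lra.
Qed.

Lemma between : forall (J : R -> Prop) t u s, nondeg_interval J -> J t -> in_closure J u ->
  Rmin t u < s < Rmax t u -> J s.
Proof.
  intros J t u s [HJ _] Ht Hu Hs.
  assert (Hp : 0 < Rabs (s - u)).
  { apply Rabs_pos_lt. unfold Rmin, Rmax in Hs. destruct (Rle_dec t u); lra. }
  destruct (Hu _ Hp) as [s' [Hs' Hd]].
  unfold Rmin, Rmax in Hs. destruct (Rle_dec t u).
  - assert (E : Rabs (s - u) = u - s) by (rewrite Rabs_left; lra). rewrite E in Hd. apply Rabs_def2 in Hd. apply (HJ t s' s); auto; lra.
  - assert (E : Rabs (s - u) = s - u) by (rewrite Rabs_right; lra). rewrite E in Hd. apply Rabs_def2 in Hd. apply (HJ s' t s); auto; lra.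
Qed.

Ltac getd Hae r Hr := destruct (Hae r Hr) as [dx [dy [dz [dv [d1 [d2 [d3 [d4 [Hh Hmax]]]]]]]]].

Theorem lemma1
  (F : R -> R -> R) (u1 u2 x y z v p1 p2 p3 p4 : R -> R)
  (theta : R -> R) (J : R -> Prop) (t0 : R) :
  is_norm2 F ->
  normal_extremal F u1 u2 x y z v p1 p2 p3 p4 ->
  p4 0 <> 0 ->
  continuity theta ->
  (forall t, exists rho, is_r F (theta t) rho /\
      hh1 (p1 t) (p3 t) (p4 t) (x t) (y t) (z t) = rho * cos (theta t) /\
      hh2 (p2 t) (p3 t) (p4 t) (x t) = rho * sin (theta t)) ->
  nondeg_interval J ->
  (forall s1 s2, J s1 -> J s2 -> theta s1 = theta s2) ->
  in_closure J t0 ->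
  (forall s, in_closure J s -> Rabs t0 <= Rabs s) ->
  let f1 := p1 0 in let f2 := p2 0 in let f3 := p3 0 in let f4 := p4 0 in
  let x0 := - f3 / f4 in
  2 * f2 * f4 - f3 ^ 2 <> 0 /\
  (forall t, J t ->
     x t = x0 /\
     y t = y t0 + 2 * f4 * (t - t0) / (2 * f2 * f4 - f3 ^ 2) /\
     z t = z t0 + f3 * (t - t0) / (f3 ^ 2 - 2 * f2 * f4) /\
     v t = v t0 + f3 ^ 2 * (t - t0) / (6 * f4 * (2 * f2 * f4 - f3 ^ 2))) /\
  f1 * x0 + f2 * y t0 + (2 * f3 + / 2 * f4 * x0) * z t0 + 3 * f4 * v t0 = t0 /\
  (f3 = 0 ->
     (forall t, J t ->
        x t = 0 /\ y t = y t0 + (t - t0) / f2 /\ z t = z t0 /\ v t = v t0) /\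
     v t0 = (t0 - f2 * y t0) / (3 * f4)).
Proof.
  intros Hnorm Hext Hp4 Hth Hrho HJ HJc Hcl Hclosest.
  cbv zeta. cbv zeta in Hext.
  destruct Hext as [HU [Hx0 [Hy0 [Hz0 [Hv0 [Ax [Ay [Az [Av [A1 [A2 [A3 [A4 [Hnz [N0 [HN Hae]]]]]]]]]]]]]]]].
  assert (I1 : forall t, p4 t = p4 0).
  { apply (const_global p4 N0 A4 HN). intros r Hr. getd Hae r Hr. exact d4. }
  assert (I2 : forall t, p3 t = p3 0 + / 2 * p4 0 * x t).
  { assert (Hc : forall t, (fun t => p3 t + (- (/ 2 * p4 0)) * x t) t = (fun t => p3 t + (- (/ 2 * p4 0)) * x t) 0).
    { apply const_global with N0; [ | exact HN | ].
      - apply LA_plus; auto. apply LA_scal; auto.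
      - intros r Hr. getd Hae r Hr. eapply D_eq. apply D_plus. exact d3. apply D_scal. exact dx. rewrite (I1 r). ring. }
    intro t; specialize (Hc t); cbv beta in Hc; rewrite Hx0 in Hc; lra. }
  assert (I3 : forall t, p2 t = p2 0 + / 2 * p3 0 * x t + / 6 * p4 0 * (x t * x t)).
  { assert (Hc : forall t, (fun t => p2 t + (- (/ 2 * p3 0)) * x t + (- (/ 6 * p4 0)) * (x t * x t)) t = (fun t => p2 t + (- (/ 2 * p3 0)) * x t + (- (/ 6 * p4 0)) * (x t * x t)) 0).
    { apply const_global with N0; [ | exact HN | ].
      - apply LA_plus. apply LA_plus; auto. apply LA_scal; auto. apply LA_scal. apply LA_mult; auto.
      - intros r Hr. getd Hae r Hr. eapply D_eq. apply D_plus. apply D_plus. exact d2. apply D_scal. exact dx.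
        apply D_scal. apply D_mult; exact dx. rewrite (I2 r), (I1 r). field. }
    intro t; specialize (Hc t); cbv beta in Hc; rewrite Hx0 in Hc; lra. }
  assert (I4 : forall t, p1 t = p1 0 - / 2 * p3 0 * y t - / 6 * p4 0 * (x t * y t) - / 2 * p4 0 * z t).
  { assert (Hc : forall t, (fun t => p1 t + (/ 2 * p3 0) * y t + (/ 6 * p4 0) * (x t * y t) + (/ 2 * p4 0) * z t) t = (fun t => p1 t + (/ 2 * p3 0) * y t + (/ 6 * p4 0) * (x t * y t) + (/ 2 * p4 0) * z t) 0).
    { apply const_global with N0; [ | exact HN | ].
      - apply LA_plus. apply LA_plus. apply LA_plus; auto. apply LA_scal; auto. apply LA_scal. apply LA_mult; auto.
        apply LA_scal; auto.
      - intros r Hr. getd Hae r Hr. eapply D_eq. apply D_plus. apply D_plus. apply D_plus. exact d1. apply D_scal. exact dy.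
        apply D_scal. apply D_mult. exact dx. exact dy. apply D_scal. exact dz. rewrite (I2 r), (I1 r). field. }
    intro t; specialize (Hc t); cbv beta in Hc; rewrite Hx0, Hy0, Hz0 in Hc; lra. }
  assert (I5 : forall t, p1 0 * x t + p2 0 * y t + (2 * p3 0) * z t + (/ 2 * p4 0) * (x t * z t) + (3 * p4 0) * v t + (-1) * t = 0).
  { assert (Hc : forall t, (fun t => p1 0 * x t + p2 0 * y t + (2 * p3 0) * z t + (/ 2 * p4 0) * (x t * z t) + (3 * p4 0) * v t + (-1) * t) t = (fun t => p1 0 * x t + p2 0 * y t + (2 * p3 0) * z t + (/ 2 * p4 0) * (x t * z t) + (3 * p4 0) * v t + (-1) * t) 0).
    { apply const_global with N0; [ | exact HN | ].
      - repeat apply LA_plus; repeat apply LA_scal; auto. apply LA_mult; auto. apply LA_id.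
      - intros r Hr. getd Hae r Hr. eapply D_eq.
        apply D_plus. apply D_plus. apply D_plus. apply D_plus. apply D_plus.
        apply D_scal; exact dx. apply D_scal; exact dy. apply D_scal; exact dz.
        apply D_scal. apply D_mult. exact dx. exact dz. apply D_scal; exact dv. apply D_scal. apply D_id.
        unfold hh1, hh2 in Hh. rewrite (I4 r), (I3 r), (I2 r), (I1 r) in Hh. lra. }
    intro t; specialize (Hc t); cbv beta in Hc; rewrite Hx0, Hy0, Hz0, Hv0 in Hc; lra. }
  assert (Hhc : forall s1 s2, J s1 -> J s2 ->
     hh1 (p1 s1) (p3 s1) (p4 s1) (x s1) (y s1) (z s1) = hh1 (p1 s2) (p3 s2) (p4 s2) (x s2) (y s2) (z s2) /\
     hh2 (p2 s1) (p3 s1) (p4 s1) (x s1) = hh2 (p2 s2) (p3 s2) (p4 s2) (x s2)).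
  { intros s1 s2 H1 H2. destruct (Hrho s1) as [r1 [Hr1 [Ha1 Hb1]]]. destruct (Hrho s2) as [r2 [Hr2 [Ha2 Hb2]]].
    rewrite (HJc s1 s2 H1 H2) in Hr1, Ha1, Hb1. rewrite (rho_unique F _ _ _ Hr1 Hr2) in Ha1, Hb1.
    rewrite Ha1, Hb1, Ha2, Hb2. auto. }
  assert (P1 : forall al be, al < be -> (forall s, al < s < be -> J s) -> forall r, al < r < be -> ~ N0 r ->
     x r = - p3 0 / p4 0).
  { intros al be Hab HJs r Hr HNr. getd Hae r HNr.
    assert (E1 : derivable_pt_lim (fun t => hh1 (p1 t) (p3 t) (p4 t) (x t) (y t) (z t)) r 0).
    { apply D_loc_const with al be; auto. intros s Hs. apply Hhc; auto. }
    assert (E2 : derivable_pt_lim (fun t => hh2 (p2 t) (p3 t) (p4 t) (x t)) r 0).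
    { apply D_loc_const with al be; auto. intros s Hs. apply Hhc; auto. }
    assert (F1 : (fun t => hh1 (p1 t) (p3 t) (p4 t) (x t) (y t) (z t)) = fun t => p1 t + (- / 2) * (p3 t * y t) + (- / 12) * (p4 t * (x t * y t)) + (- / 2) * (p4 t * z t)).
    { apply functional_extensionality. intro t. unfold hh1. ring. }
    assert (F2 : (fun t => hh2 (p2 t) (p3 t) (p4 t) (x t)) = fun t => p2 t + (/ 2) * (p3 t * x t) + (/ 12) * (p4 t * (x t * x t))).
    { apply functional_extensionality. intro t. unfold hh2. ring. }
    rewrite F1 in E1. rewrite F2 in E2.
    pose proof (D_plus _ _ r _ _ (D_plus _ _ r _ _ (D_plus _ _ r _ _ d1 (D_scal (- / 2) _ r _ (D_mult _ _ r _ _ d3 dy))) (D_scal (- / 12) _ r _ (D_mult _ _ r _ _ d4 (D_mult _ _ r _ _ dx dy)))) (D_scal (- / 2) _ r _ (D_mult _ _ r _ _ d4 dz))) as G1.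
    pose proof (D_plus _ _ r _ _ (D_plus _ _ r _ _ d2 (D_scal (/ 2) _ r _ (D_mult _ _ r _ _ d3 dx))) (D_scal (/ 12) _ r _ (D_mult _ _ r _ _ d4 (D_mult _ _ r _ _ dx dx)))) as G2.
    pose proof (uniqueness_limite _ _ _ _ E1 G1) as U1.
    pose proof (uniqueness_limite _ _ _ _ E2 G2) as U2.
    set (w := p3 r + / 2 * p4 r * x r).
    assert (W1 : w * u2 r = 0) by (unfold w; lra).
    assert (W2 : w * u1 r = 0) by (unfold w; lra).
    set (a := hh1 (p1 r) (p3 r) (p4 r) (x r) (y r) (z r)) in *.
    set (b := hh2 (p2 r) (p3 r) (p4 r) (x r)) in *.
    assert (W : w = 0).
    { assert (Hw : w * (a * u1 r + b * u2 r) = a * (w * u1 r) + b * (w * u2 r)) by ring.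
      rewrite Hh, W1, W2 in Hw. lra. }
    unfold w in W. rewrite (I2 r), (I1 r) in W.
    replace (- p3 0 / p4 0) with ((- p3 0) / p4 0) by reflexivity.
    apply (Rmult_eq_reg_l (p4 0)); auto.
    replace (p4 0 * (- p3 0 / p4 0)) with (- p3 0) by (field; auto). lra. }
  set (x0 := - p3 0 / p4 0) in *.
  set (Dd := 2 * p2 0 * p4 0 - p3 0 ^ 2).
  assert (P2x : forall al be, al < be -> (forall s, al < s < be -> J s) -> forall s, al <= s <= be -> x s = x0).
  { intros al be Hab HJs s Hs. apply (cont_dense x N0 al be s x0 Ax HN Hab Hs).
    intros r Hr HNr. apply (P1 al be Hab HJs r Hr HNr). }
  assert (P2 : forall al be, al < be -> (forall s, al < s < be -> J s) -> forall r, al < r < be -> ~ N0 r ->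
     u1 r = 0 /\ x r = x0 /\ hh2 (p2 r) (p3 r) (p4 r) (x r) * u2 r = 1 /\ hh2 (p2 r) (p3 r) (p4 r) (x r) = Dd / (2 * p4 0)).
  { intros al be Hab HJs r Hr HNr. getd Hae r HNr.
    assert (Xr : x r = x0) by (apply (P2x al be); auto; lra).
    assert (U : u1 r = 0).
    { apply (uniqueness_limite x r); auto. apply D_loc_const with al be; auto.
      intros s Hs. rewrite Xr. apply (P2x al be); auto; lra. }
    split; auto. split; auto. split.
    - rewrite U in Hh. lra.
    - unfold hh2. rewrite (I3 r), (I2 r), (I1 r), Xr. unfold x0, Dd. field. auto. }
  destruct HJ as [HJi [ja [jb [Hja [Hjb Hjab]]]]].
  assert (HJab : forall s, ja < s < jb -> J s) by (intros s Hs; apply (HJi ja jb s); auto; lra).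
  assert (HD : Dd <> 0).
  { destruct (dense N0 ja jb HN Hjab) as [r [Hr HNr]].
    destruct (P2 ja jb Hjab HJab r Hr HNr) as [_ [_ [Hh2 Hv2]]].
    intro H0. rewrite Hv2, H0 in Hh2. unfold Rdiv in Hh2. rewrite Rmult_0_l, Rmult_0_l in Hh2. lra. }
  assert (Hin : forall t, J t -> in_closure J t).
  { intros t Ht eps Heps. exists t. split; auto. replace (t - t) with 0 by ring. rewrite Rabs_R0; auto. }
  assert (Xcl : forall t, in_closure J t -> x t = x0).
  { intros t Ht.
    assert (Hs : exists s, J s /\ s <> t).
    { destruct (Req_dec t ja). exists jb. split; auto. lra. exists ja. split; auto. }
    destruct Hs as [s [Hs Hst]].
    apply (P2x (Rmin s t) (Rmax s t)).
    - unfold Rmin, Rmax. destruct (Rle_dec s t); lra.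
    - intros s' Hs'. apply (between J s t s'); auto. split; auto. exists ja, jb. auto.
    - unfold Rmin, Rmax. destruct (Rle_dec s t); lra. }
  set (c := 2 * p4 0 / Dd).
  assert (U2 : forall t r, J t -> Rmin t t0 < r < Rmax t t0 -> ~ N0 r -> u1 r = 0 /\ u2 r = c /\ x r = x0).
  { intros t r Ht Hr HNr.
    assert (Hab : Rmin t t0 < Rmax t t0) by lra.
    destruct (P2 (Rmin t t0) (Rmax t t0) Hab (fun s Hs => between J t t0 s (conj HJi (ex_intro _ ja (ex_intro _ jb (conj Hja (conj Hjb Hjab))))) Ht Hcl Hs) r Hr HNr)
      as [Hu1 [Hx [Hh2 Hv2]]].
    split; auto. split; auto. rewrite Hv2 in Hh2. unfold c.
    assert (H2p : 2 * p4 0 <> 0) by (apply Rmult_integral_contrapositive; split; auto; lra).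
    apply (Rmult_eq_reg_l (Dd / (2 * p4 0))); [ rewrite Hh2; field; auto | ].
    unfold Rdiv. apply Rmult_integral_contrapositive; split; auto. apply Rinv_neq_0_compat; auto. }
  assert (Hmain : forall t, J t -> x t = x0 /\ y t = y t0 + 2 * p4 0 * (t - t0) / Dd /\
     z t = z t0 + p3 0 * (t - t0) / (p3 0 ^ 2 - 2 * p2 0 * p4 0) /\
     v t = v t0 + p3 0 ^ 2 * (t - t0) / (6 * p4 0 * Dd)).
  { intros t Ht. split. apply Xcl; auto.
    assert (HD' : p3 0 ^ 2 - 2 * p2 0 * p4 0 <> 0) by (unfold Dd in HD; lra).
    split; [|split].
    - assert (E : y t - y t0 = c * (t - t0)).
      { apply lin_between with N0; auto. intros r Hr HNr. getd Hae r HNr.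
        destruct (U2 t r Ht Hr HNr) as [_ [Hu2 _]]. rewrite <- Hu2. exact dy. }
      unfold c in E. assert (y t = y t0 + 2 * p4 0 / Dd * (t - t0)) by lra. rewrite H. field. auto.
    - assert (E : z t - z t0 = (/ 2 * x0 * c) * (t - t0)).
      { apply lin_between with N0; auto. intros r Hr HNr. getd Hae r HNr.
        destruct (U2 t r Ht Hr HNr) as [Hu1 [Hu2 Hx]]. eapply D_eq. exact dz. rewrite Hu1, Hu2, Hx. ring. }
      unfold c, x0, Dd in E. assert (z t = z t0 + / 2 * (- p3 0 / p4 0) * (2 * p4 0 / (2 * p2 0 * p4 0 - p3 0 ^ 2)) * (t - t0)) by lra.
      rewrite H. unfold Dd in HD. field. auto.
    - assert (E : v t - v t0 = (/ 12 * x0 ^ 2 * c) * (t - t0)).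
      { apply lin_between with N0; auto. intros r Hr HNr. getd Hae r HNr.
        destruct (U2 t r Ht Hr HNr) as [Hu1 [Hu2 Hx]]. eapply D_eq. exact dv. rewrite Hu1, Hu2, Hx. ring. }
      unfold c, x0, Dd in E. assert (v t = v t0 + / 12 * (- p3 0 / p4 0) ^ 2 * (2 * p4 0 / (2 * p2 0 * p4 0 - p3 0 ^ 2)) * (t - t0)) by lra.
      rewrite H. unfold Dd in HD |- *. field. auto. }
  assert (Hid : p1 0 * x0 + p2 0 * y t0 + (2 * p3 0 + / 2 * p4 0 * x0) * z t0 + 3 * p4 0 * v t0 = t0).
  { specialize (I5 t0). rewrite (Xcl t0 Hcl) in I5. lra. }
  split. exact HD. split. exact Hmain. split. exact Hid.
  intros H3. 
  assert (Hx00 : x0 = 0) by (unfold x0; rewrite H3; field; auto).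
  assert (Hp2 : p2 0 <> 0) by (intro H0; apply HD; unfold Dd; rewrite H0, H3; ring).
  split.
  - intros t Ht. destruct (Hmain t Ht) as [Hx [Hy [Hz Hv]]]. split. rewrite Hx; auto.
    split. rewrite Hy. unfold Dd. rewrite H3. field. auto.
    split. rewrite Hz, H3. unfold Rdiv. ring. rewrite Hv, H3. unfold Rdiv. ring.
  - rewrite Hx00, H3 in Hid. apply (Rmult_eq_reg_l (3 * p4 0)). field_simplify. lra. auto.
    apply Rmult_integral_contrapositive; split; auto; lra.
Qed.
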